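(* $$\liminf_{n\to\infty}\frac{a(n)}{n}=\frac{\varphi+2}{5}\qquad\text{and}\qquad \limsup_{n\to\infty}\frac{a(n)}{n}=\varphi .$$
   Context: $\varphi=(1+\sqrt5)/2$. Let $(F_n)_{n\ge 0}$ be the Fibonacci numbers: $F_0=0$, $F_1=1$, $F_n=F_{n-1}+F_{n-2}$ for $n\ge 2$. Define $(a(n))_{n\ge 0}$ (OEIS A105774) by $a(0)=0$, $a(1)=1$, and for $n\ge 2$, $a(n)=F_{j+1}-a(n-F_j)$, where $j\ge 2$ is the unique index with $F_j<n\le F_{j+1}$. *)

(* Defs.v *)
From Stdlib Require Import Reals ZArith Arith.
From Coquelicot Require Import Coquelicot.
Open Scope R_scope.

Fixpoint fib (n : nat) : nat :=
  match n with
  | O => O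
  | S m => match m with
           | O => 1%nat
           | S k => (fib m + fib k)%nat
           end
  end.

Definition phi : R := (1 + sqrt 5) / 2.

Definition is_A105774 (a : nat -> Z) : Prop :=
  a 0%nat = 0%Z /\ a 1%nat = 1%Z /\
  forall (n j : nat), (2 <= j)%nat -> (fib j < n <= fib (j + 1))%nat ->
    a n = (Z.of_nat (fib (j + 1)) - a (n - fib j)%nat)%Z.

(* Main.v *)
Require Import Defs.
From Stdlib Require Import Reals ZArith Arith Lia Lra Psatz.
From Coquelicot Require Import Coquelicot.
Open Scope R_scope.

Lemma fib_SS n : fib (S (S n)) = (fib (S n) + fib n)%nat.
Proof. reflexivity. Qed.

Lemma fib_mono_S n : (fib n <= fib (S n))%nat.
Proof. destruct n; [simpl; lia|]. rewrite fib_SS. lia. Qed.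

Lemma fib_mono a b : (a <= b)%nat -> (fib a <= fib b)%nat.
Proof. induction 1; [lia|]. pose proof (fib_mono_S m); lia. Qed.

Lemma fib_S_pos n : (1 <= fib (S n))%nat.
Proof. induction n; [simpl; lia|]. rewrite fib_SS. lia. Qed.

Lemma fib_ge n : (n <= fib (S n))%nat.
Proof.
  induction n as [n IH] using lt_wf_ind.
  destruct n as [|[|n]]; [simpl; lia|simpl; lia|].
  rewrite fib_SS. pose proof (IH (S n) ltac:(lia)).
  pose proof (fib_S_pos n).
  lia.
Qed.

Lemma fib_pos n : (1 <= n)%nat -> (1 <= fib n)%nat.
Proof. intros. destruct n; [lia|]. apply fib_S_pos. Qed.

Lemma find_j n : (2 <= n)%nat -> exists j, (2 <= j)%nat /\ (fib j < n <= fib (j + 1))%nat.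
Proof.
  induction n; intros H; [lia|].
  destruct (Nat.eq_dec n 1) as [->|Hn]. { exists 2%nat. simpl. lia. }
  destruct IHn as [j [Hj1 Hj2]]; [lia|].
  destruct (Nat.eq_dec n (fib (j+1))) as [E|E].
  - exists (j+1)%nat. split; [lia|].
    replace (j+1+1)%nat with (S (S j)) by lia. rewrite fib_SS.
    replace (j+1)%nat with (S j) in * by lia.
    pose proof (fib_pos j ltac:(lia)). lia.
  - exists j. lia.
Qed.

Lemma phi_sq : phi * phi = phi + 1.
Proof.
  unfold phi. pose proof (sqrt_sqrt 5 ltac:(lra)). nra.
Qed.

Lemma phi_bounds : 1.6 < phi < 1.65.
Proof.
  unfold phi. pose proof (sqrt_sqrt 5 ltac:(lra)). pose proof (sqrt_pos 5).
  split; nra.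
Qed.

Lemma fibR_SS n : INR (fib (S (S n))) = INR (fib (S n)) + INR (fib n).
Proof. rewrite fib_SS, plus_INR. reflexivity. Qed.

Lemma fib_err n : Rabs (INR (fib (S n)) - phi * INR (fib n)) <= 1.
Proof.
  assert (H : forall n, INR (fib (S n)) - phi * INR (fib n) = (1 - phi) ^ n).
  { induction n0. simpl. lra.
    rewrite fibR_SS. rewrite <- tech_pow_Rmult. rewrite <- IHn0.
    assert (E : forall x y : R, x + y - phi * x - (1 - phi) * (x - phi * y) = (phi + 1 - phi * phi) * y) by (intros; ring).
    rewrite phi_sq in E. specialize (E (INR (fib (S n0))) (INR (fib n0))). lra. }
  rewrite H. clear H. induction n. simpl. rewrite Rabs_R1. lra.
  rewrite <- tech_pow_Rmult. rewrite Rabs_mult. pose proof phi_bounds.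
  assert (Rabs (1 - phi) <= 1) by (unfold Rabs; destruct Rcase_abs; lra).
  pose proof (Rabs_pos (1 - phi)). pose proof (Rabs_pos ((1-phi)^n)). nra.
Qed.

Lemma abs_split x b : Rabs x <= b -> -b <= x <= b.
Proof. unfold Rabs. destruct (Rcase_abs x); lra. Qed.

Lemma fib_err1 n : -1 <= INR (fib (S n)) - phi * INR (fib n) <= 1.
Proof. apply abs_split, fib_err. Qed.

Lemma fib_err2 n : -3 <= INR (fib (S (S n))) - (phi + 1) * INR (fib n) <= 3.
Proof.
  pose proof (fib_err1 n). pose proof (fib_err1 (S n)). pose proof phi_bounds.
  rewrite fibR_SS in *. pose proof (pos_INR (fib n)). nra.
Qed.

Definition Lc : R := (phi + 2) / 5.

Lemma Lc_eq : Lc * (phi + 2) = phi + 1.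
Proof. unfold Lc. pose proof phi_sq. nra. Qed.

Lemma Lc_bounds : 0.72 < Lc < 0.73.
Proof. unfold Lc. pose proof phi_bounds. lra. Qed.

Section A.
Variable a : nat -> Z.
Hypothesis ha : is_A105774 a.

Lemma recR n j : (2 <= j)%nat -> (fib j < n <= fib (j + 1))%nat ->
  IZR (a n) = INR (fib (j+1)) - IZR (a (n - fib j)%nat).
Proof.
  intros H1 H2. destruct ha as [_ [_ H]]. rewrite (H n j H1 H2).
  rewrite minus_IZR, <- INR_IZR_INZ. reflexivity.
Qed.

Lemma finite_lb N : exists B, forall n, (n <= N)%nat -> B <= IZR (a n).
Proof.
  induction N.
  - exists (IZR (a 0%nat)). intros n Hn. replace n with 0%nat by lia. lra.
  - destruct IHN as [B HB]. exists (Rmin B (IZR (a (S N)))). intros n Hn.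
    destruct (Nat.eq_dec n (S N)) as [->|E].
    + apply Rmin_r.
    + eapply Rle_trans. apply Rmin_l. apply HB. lia.
Qed.

Lemma fib_split j : (1 <= j)%nat -> fib (j+1) = (fib j + fib (j-1))%nat.
Proof. intros. destruct j; [lia|]. replace (S j + 1)%nat with (S (S j)) by lia.
  rewrite fib_SS. replace (S j - 1)%nat with j by lia. reflexivity. Qed.

Lemma lower eps : 0 < eps -> eps <= Lc ->
  exists C, 2 <= C /\ forall n, (Lc - eps) * INR n - C <= IZR (a n).
Proof.
  intros He1 He2. pose proof Lc_bounds. pose proof phi_bounds. pose proof Lc_eq.
  destruct (INR_unbounded (/ eps)) as [K HK].
  set (j0 := (K + 3)%nat).
  destruct (finite_lb (fib j0)) as [B HB].
  set (C := Rmax 2 ((Lc - eps) * INR (fib j0) - B)).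
  exists C. split; [apply Rmax_l|].
  assert (HC1 : 2 <= C) by apply Rmax_l.
  assert (HC2 : (Lc - eps) * INR (fib j0) - B <= C) by apply Rmax_r.
  destruct ha as [h0 [h1 _]].
  intro n. induction n as [n IH] using lt_wf_ind.
  destruct (Nat.lt_ge_cases n 2) as [Hn|Hn].
  { destruct n as [|[|n]]; [| |lia].
    - rewrite h0. simpl. lra.
    - rewrite h1. simpl. lra. }
  destruct (find_j n Hn) as [j [Hj1 Hj2]].
  destruct (Nat.lt_ge_cases j j0) as [Hjj|Hjj].
  { assert (Hle : (n <= fib j0)%nat).
    { pose proof (fib_mono (j+1) j0 ltac:(lia)). lia. }
    pose proof (HB n Hle). apply le_INR in Hle.
    assert ((Lc - eps) * INR n <= (Lc - eps) * INR (fib j0)) by (apply Rmult_le_compat_l; lra).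
    lra. }
  rewrite (recR n j Hj1 Hj2).
  pose proof (fib_split j ltac:(lia)) as Hs.
  set (m := (n - fib j)%nat) in *.
  assert (Hm : (1 <= m <= fib (j-1))%nat) by lia.
  assert (Hn' : INR n = INR (fib j) + INR m) by (unfold m; rewrite minus_INR by lia; ring).
  destruct (Nat.eq_dec m 1) as [Em|Em].
  { rewrite Em, h1. rewrite Em in Hn'. simpl in Hn'.
    pose proof (fib_mono j (j+1) ltac:(lia)) as Hf. apply le_INR in Hf.
    pose proof (pos_INR (fib j)).
    assert ((Lc - eps) * INR (fib j) <= INR (fib j)) by nra.
    rewrite Hn'. nra. }
  destruct (find_j m ltac:(lia)) as [i [Hi1 Hi2]].
  rewrite (recR m i Hi1 Hi2).
  set (m' := (m - fib i)%nat) in *.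
  assert (Hm' : INR m = INR (fib i) + INR m') by (unfold m'; rewrite minus_INR by lia; ring).
  assert (IHm := IH m' ltac:(unfold m'; pose proof (fib_pos i ltac:(lia)); lia)).
  assert (Hij : (i + 2 <= j)%nat).
  { destruct (Nat.le_gt_cases (i+2) j); auto.
    pose proof (fib_mono (j-1) i ltac:(lia)). lia. }
  pose proof (fib_mono (i+1) (j-1) ltac:(lia)) as Hf1. apply le_INR in Hf1.
  pose proof (fib_mono i (j-2) ltac:(lia)) as Hf2. apply le_INR in Hf2.
  assert (Hs' : INR (fib (j+1)) = INR (fib j) + INR (fib (j-1))) by (rewrite Hs, plus_INR; ring).
  assert (Hkey : (Lc - eps) * (INR (fib j) + INR (fib (j-2))) <= INR (fib j)).
  { destruct j as [|[|k]]; [lia|lia|].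
    replace (S (S k) - 2)%nat with k in * by lia.
    pose proof (fib_err2 k).
    assert (HkK : (S K <= k)%nat) by (unfold j0 in Hjj; lia).
    pose proof (fib_ge K). pose proof (fib_mono (S K) k HkK) as Hm3.
    assert (Hfk : / eps < INR (fib k)).
    { apply Rlt_le_trans with (INR K); [lra|]. apply le_INR. lia. }
    assert (1 < eps * INR (fib k)).
    { apply Rmult_lt_compat_l with (r := eps) in Hfk; auto.
      rewrite Rinv_r in Hfk; lra. }
    pose proof (pos_INR (fib k)).
    nra. }
  assert (Hmono : (Lc - eps) * INR (fib i) <= (Lc - eps) * INR (fib (j-2))) by (apply Rmult_le_compat_l; lra).
  nra.
Qed.
End A.

Lemma lt_div x b c : 0 < b -> x < c * b -> x / b < c.
Proof. intros Hb H. apply Rmult_lt_reg_r with b; auto. unfold Rdiv.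
  rewrite Rmult_assoc, Rinv_l by lra. lra. Qed.

Lemma div_gt x b c : 0 < b -> c * b < x -> c < x / b.
Proof. intros Hb H. apply Rmult_lt_reg_r with b; auto. unfold Rdiv.
  rewrite Rmult_assoc, Rinv_l by lra. lra. Qed.

Lemma fibR_ge k : INR k - 1 <= INR (fib k).
Proof. destruct k. simpl. lra. pose proof (fib_ge k) as H. apply le_INR in H.
  rewrite S_INR. lra. Qed.

Section B.
Variable a : nat -> Z.
Hypothesis ha : is_A105774 a.

Lemma upper : exists D, 0 <= D /\ forall n, IZR (a n) <= phi * INR n + D.
Proof.
  pose proof Lc_bounds. pose proof phi_bounds.
  destruct (lower a ha Lc ltac:(lra) ltac:(lra)) as [C [HC HL]].
  exists (1 + C). split; [lra|]. destruct ha as [h0 [h1 _]].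
  intro n. destruct (Nat.lt_ge_cases n 2) as [Hn|Hn].
  { destruct n as [|[|n]]; [| |lia].
    - rewrite h0. simpl. lra.
    - rewrite h1. simpl. lra. }
  destruct (find_j n Hn) as [j [Hj1 Hj2]].
  rewrite (recR a ha n j Hj1 Hj2).
  pose proof (HL (n - fib j)%nat). replace (Lc - Lc) with 0 in H1 by ring.
  pose proof (fib_err1 j). replace (j+1)%nat with (S j) by lia.
  assert (INR (fib j) <= INR n) by (apply le_INR; lia).
  pose proof (pos_INR (n - fib j)). nra.
Qed.

Lemma liminf_part : is_LimInf_seq (fun n : nat => IZR (a n) / INR n) (Finite Lc).
Proof.
  pose proof Lc_bounds. pose proof phi_bounds. pose proof Lc_eq.
  intro eps. destruct eps as [eps Heps]. simpl. split.
  - intro N. set (e := Rmin eps 0.1).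
    assert (He : 0 < e <= eps /\ e <= 0.1).
    { unfold e. split; [split|]; [apply Rmin_glb_lt; lra|apply Rmin_l|apply Rmin_r]. }
    destruct (lower a ha e ltac:(lra) ltac:(lra)) as [C [HC HL]].
    destruct (INR_unbounded ((3 + C) / e)) as [K HK].
    set (k := S (Nat.max N K)).
    exists (fib (k + 2)). split.
    { pose proof (fib_ge (k+1)). replace (S (k+1)) with (k+2)%nat in H2 by lia. unfold k in *. lia. }
    assert (Hs : fib (k+2) = (fib (k+1) + fib k)%nat).
    { replace (k+2)%nat with (S (S k)) by lia. replace (k+1)%nat with (S k) by lia. apply fib_SS. }
    assert (Hpos : (1 <= fib k)%nat) by (apply fib_pos; unfold k; lia).
    pose proof (recR a ha (fib (k+2)) (k+1) ltac:(unfold k; lia)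
      ltac:(replace (k+1+1)%nat with (k+2)%nat by lia; lia)) as E.
    replace (k+1+1)%nat with (k+2)%nat in E by lia.
    replace (fib (k+2) - fib (k+1))%nat with (fib k) in E by lia.
    pose proof (HL (fib k)).
    pose proof (fib_err2 k). replace (S (S k)) with (k+2)%nat in H3 by lia.
    assert (HFK : (3 + C) / e < INR (fib k)).
    { apply Rlt_le_trans with (INR K); auto. pose proof (fibR_ge k).
      assert (INR K + 1 <= INR k) by (rewrite <- S_INR; apply le_INR; unfold k; lia). lra. }
    assert (3 + C < e * INR (fib k)).
    { apply Rmult_lt_compat_l with (r := e) in HFK; [|lra].
      unfold Rdiv in HFK. rewrite <- Rmult_assoc, (Rmult_comm e), Rmult_assoc, Rinv_r in HFK; lra. }
    apply lt_div. { apply lt_0_INR. lia. }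
    assert (INR (fib k) >= 1) by (apply Rle_ge; replace 1 with (INR 1) by reflexivity; apply le_INR; lia).
    pose proof (pos_INR (fib (k+2))).
    assert (IZR (a (fib (k+2))) < (Lc + e) * INR (fib (k+2))) by nra.
    nra.
  - set (e := Rmin (eps/2) Lc).
    assert (He : 0 < e <= eps/2 /\ e <= Lc).
    { unfold e. split; [split|]; [apply Rmin_glb_lt; lra|apply Rmin_l|apply Rmin_r]. }
    destruct (lower a ha e ltac:(lra) ltac:(lra)) as [C [HC HL]].
    destruct (INR_unbounded (2 * C / eps)) as [N HN].
    exists N. intros n Hn.
    assert (HnN : INR N <= INR n) by (apply le_INR; lia).
    assert (Hp : 0 < 2 * C / eps) by (apply Rdiv_lt_0_compat; lra).
    apply div_gt. lra.
    assert (C < eps / 2 * INR n).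
    { assert (2 * C / eps < INR n) by lra.
      apply Rmult_lt_compat_l with (r := eps/2) in H2; [|lra].
      replace (eps / 2 * (2 * C / eps)) with C in H2 by (field; lra). lra. }
    pose proof (HL n). nra.
Qed.

Lemma limsup_part : is_LimSup_seq (fun n : nat => IZR (a n) / INR n) (Finite phi).
Proof.
  pose proof phi_bounds.
  intro eps. destruct eps as [eps Heps]. simpl. split.
  - intro N. destruct (INR_unbounded (4 / eps)) as [K HK].
    set (k := S (S (S (Nat.max N K)))).
    exists (fib k + 1)%nat. split.
    { pose proof (fib_ge (k-1)). replace (S (k-1)) with k in H0 by (unfold k; lia). unfold k in *. lia. }
    pose proof (fib_split k ltac:(unfold k; lia)) as Hs.
    assert (Hpos : (1 <= fib (k-1))%nat) by (apply fib_pos; unfold k; lia).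
    pose proof (recR a ha (fib k + 1) k ltac:(unfold k; lia) ltac:(lia)) as E.
    replace (fib k + 1 - fib k)%nat with 1%nat in E by lia.
    destruct ha as [_ [h1 _]]. rewrite h1 in E.
    pose proof (fib_err1 k). replace (S k) with (k+1)%nat in H0 by lia.
    assert (HFK : 4 / eps < INR (fib k)).
    { apply Rlt_le_trans with (INR K); auto. pose proof (fibR_ge k).
      assert (INR K + 1 <= INR k) by (rewrite <- S_INR; apply le_INR; unfold k; lia). lra. }
    assert (4 < eps * INR (fib k)).
    { apply Rmult_lt_compat_l with (r := eps) in HFK; [|lra].
      unfold Rdiv in HFK. rewrite <- Rmult_assoc, (Rmult_comm eps), Rmult_assoc, Rinv_r in HFK; lra. }
    apply div_gt. { apply lt_0_INR. lia. }
    rewrite plus_INR, E. change (INR 1) with 1. pose proof (pos_INR (fib k)). nra.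
  - destruct upper as [D [HD HU]].
    destruct (INR_unbounded (D / eps)) as [N HN].
    exists (S N). intros n Hn.
    assert (HnN : INR N + 1 <= INR n) by (rewrite <- S_INR; apply le_INR; lia).
    assert (Hp : 0 <= D / eps) by (apply Rmult_le_pos; [lra| left; apply Rinv_0_lt_compat; lra]).
    apply lt_div. lra.
    assert (D < eps * INR n).
    { assert (D / eps < INR n) by lra.
      apply Rmult_lt_compat_l with (r := eps) in H0; [|lra].
      replace (eps * (D / eps)) with D in H0 by (field; lra). lra. }
    pose proof (HU n). nra.
Qed.
End B.

Theorem proposition7 (a : nat -> Z) (ha : is_A105774 a) :
  LimInf_seq (fun n : nat => IZR (a n) / INR n) = Finite ((phi + 2) / 5) /\
  LimSup_seq (fun n : nat => IZR (a n) / INR n) = Finite phi.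
Proof.
  split.
  - apply is_LimInf_seq_unique. apply (liminf_part a ha).
  - apply is_LimSup_seq_unique. apply (limsup_part a ha).
Qed.
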